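(* There exist an alphabet $\Sigma$, a set $D\subseteq\Sigma^\omega$ of don't care words with trivial right-congruence, and a DBA $\mathcal{A}$ with informative right-congruence such that there are several pairwise non-isomorphic $D$-minimal DBAs $\mathcal{B}$ with $L(\mathcal{B})\equiv_D L(\mathcal{A})$, and such that some $D$-minimal DBA $\mathcal{B}$ with $L(\mathcal{B})\equiv_D L(\mathcal{A})$ does not have informative right-congruence.
   Context: A DBA $(\Sigma,Q,\delta,q_0,F)$ is a finite deterministic transition system (all states reachable) with $F\subseteq Q$, accepting $\alpha\in\Sigma^\omega$ iff a state of $F$ is visited infinitely often in the run on $\alpha$. $L\equiv_D L'$ means $L\setminus D=L'\setminus D$. A DBA $\mathcal{B}$ is $D$-minimal (for the language $L(\mathcal{B})$ up to $\equiv_D$) if no DBA with fewer states accepts a language $D$-equivalent to $L(\mathcal{B})$. For $L\subseteq\Sigma^\omega$, $u\sim_L v$ iff for all $\alpha\in\Sigma^\omega$: $u\alpha\in L\iff v\alpha\in L$; $D$ has trivial right-congruence if $\sim_D$ has one class. An automaton accepting $L$ has informative right-congruence if its transition system is isomorphic to the transition system induced by $\sim_L$ (states the classes $[u]$, initial $[\epsilon]$, transitions $[u]\xrightarrow{\sigma}[u\sigma]$). *)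

(* Defs.v *)
From mathcomp Require Import all_boot.
Set Implicit Arguments. Unset Strict Implicit. Unset Printing Implicit Defensive.

Section Automata.
Variable S : finType.

Definition oword := nat -> S.
Definition olang := oword -> Prop.

Definition oconcat (u : seq S) (a : oword) : oword :=
  fun n => if n < size u then nth (a 0) u n else a (n - size u).

Record DBA := {
  dba_Q :> finType;
  dba_delta : dba_Q -> S -> dba_Q;
  dba_q0 : dba_Q;
  dba_F : pred dba_Q;
  dba_reach : forall q : dba_Q, exists u : seq S, foldl dba_delta dba_q0 u = q
}.

Fixpoint run (A : DBA) (a : oword) (n : nat) : dba_Q A :=
  match n with
  | 0 => dba_q0 A
  | n'.+1 => dba_delta (run A a n') (a n')
  end.

Definition accepts (A : DBA) (a : oword) : Prop :=
  exists2 q : dba_Q A, dba_F q & forall N, exists2 n, N <= n & run A a n = q.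

Definition L (A : DBA) : olang := accepts A.

Definition equivD (D L1 L2 : olang) : Prop :=
  forall a, ~ D a -> (L1 a <-> L2 a).

Definition D_minimal (D : olang) (B : DBA) : Prop :=
  forall B' : DBA, equivD D (L B') (L B) -> #|dba_Q B| <= #|dba_Q B'|.

Definition rcong (Lg : olang) (u v : seq S) : Prop :=
  forall a, Lg (oconcat u a) <-> Lg (oconcat v a).

Definition trivial_rcong (Lg : olang) : Prop := forall u v, rcong Lg u v.

Record TS := { ts_state : Type; ts_init : ts_state;
               ts_step : ts_state -> S -> ts_state -> Prop }.
Arguments ts_init : clear implicits.
Arguments ts_step : clear implicits.

Definition TS_iso (T1 T2 : TS) : Prop :=
  exists f : ts_state T1 -> ts_state T2,
    bijective f /\ f (ts_init T1) = ts_init T2 /\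
    forall q a q', ts_step T1 q a q' <-> ts_step T2 (f q) a (f q').

Definition TS_of (A : DBA) : TS :=
  {| ts_state := dba_Q A; ts_init := dba_q0 A;
     ts_step := fun q a q' => q' = dba_delta q a |}.

Definition rclass (Lg : olang) (u : seq S) : seq S -> Prop := rcong Lg u.
Definition rclasses (Lg : olang) := {C : seq S -> Prop | exists u, C = rclass Lg u}.
Definition rcl (Lg : olang) (u : seq S) : rclasses Lg :=
  exist _ (rclass Lg u) (ex_intro _ u erefl).

Definition TS_rcong (Lg : olang) : TS :=
  {| ts_state := rclasses Lg; ts_init := rcl Lg [::];
     ts_step := fun C a C' => exists u, C = rcl Lg u /\ C' = rcl Lg (rcons u a) |}.

Definition informative_rcong (A : DBA) : Prop := TS_iso (TS_of A) (TS_rcong (L A)).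

Definition DBA_iso (A B : DBA) : Prop :=
  exists f : dba_Q A -> dba_Q B,
    bijective f /\ f (dba_q0 A) = dba_q0 B /\
    (forall q a, f (dba_delta q a) = dba_delta (f q) a) /\
    (forall q, dba_F (f q) = dba_F q).

End Automata.

(* Main.v *)
Require Import Defs.
From mathcomp Require Import all_boot.
From Stdlib Require Import Classical ClassicalEpsilon FunctionalExtensionality PropExtensionality ProofIrrelevance.
Set Implicit Arguments. Unset Strict Implicit. Unset Printing Implicit Defensive.

Section Gen.
Variable S : finType.
Variable A : DBA S.

Fixpoint runq (q : dba_Q A) (a : oword S) (n : nat) : dba_Q A :=
  match n with 0 => q | n'.+1 => dba_delta (runq q a n') (a n') end.

Definition acc_from q a :=
  exists2 p : dba_Q A, dba_F p & forall N, exists2 n, N <= n & runq q a n = p.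

Lemma run_runq a n : run A a n = runq (dba_q0 A) a n.
Proof. by elim: n => //= n ->. Qed.

Lemma runq_ext q a b : a =1 b -> forall n, runq q a n = runq q b n.
Proof. by move=> ab; elim=> //= n ->; rewrite ab. Qed.

Lemma runq_S q a n :
  runq q a n.+1 = runq (dba_delta q (a 0)) (fun k => a k.+1) n.
Proof. by elim: n => //= n ->. Qed.

Lemma runq_oconcat u : forall q a n,
  runq q (oconcat u a) (size u + n) = runq (foldl (@dba_delta _ A) q u) a n.
Proof.
elim: u => [|x u IH] q a n.
  by apply: runq_ext => k; rewrite /oconcat /= subn0.
have -> : size (x :: u) + n = (size u + n).+1 by [].
rewrite runq_S -IH; apply: runq_ext => k.
by rewrite /oconcat /= ltnS subSS.
Qed.

Lemma acc_oconcat u a :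
  accepts A (oconcat u a) <-> acc_from (foldl (@dba_delta _ A) (dba_q0 A) u) a.
Proof.
split=> -[p Fp H]; exists p => // N.
  have [n Nn Hn] := H (size u + N).
  exists (n - size u); first by rewrite leq_subRL // (leq_trans (leq_addr _ _) Nn).
  rewrite -runq_oconcat subnKC; first by rewrite -run_runq.
  exact: leq_trans (leq_addr _ _) Nn.
have [n Nn Hn] := H N.
exists (size u + n); first exact: leq_trans Nn (leq_addl _ _).
by rewrite run_runq runq_oconcat.
Qed.

Lemma acc_ext q a b : a =1 b -> acc_from q a <-> acc_from q b.
Proof.
move=> ab; split=> -[p Fp H]; exists p => // N; have [n Nn Hn] := H N;
  exists n => //; by rewrite -Hn (runq_ext q ab).
Qed.

Lemma acc_S q a : acc_from q a <-> acc_from (dba_delta q (a 0)) (fun k => a k.+1).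
Proof.
split=> -[p Fp H]; exists p => // N.
  have [n Nn Hn] := H N.+1; exists n.-1; first by case: n Nn {Hn} => // n.
  by case: n Nn Hn => // n _; rewrite runq_S.
have [n Nn Hn] := H N; exists n.+1; first exact: leqW.
by rewrite runq_S.
Qed.

Lemma acc_stable q a K p :
  (forall n, K <= n -> runq q a n = p) -> (acc_from q a <-> dba_F p).
Proof.
move=> H; split.
  by move=> [p' Fp' H']; have [n Kn Hn] := H' K; rewrite -(H n Kn) Hn.
move=> Fp; exists p => // N; exists (maxn N K); first exact: leq_maxl.
by apply: H; exact: leq_maxr.
Qed.

Lemma accepts_ext a b : a =1 b -> accepts A a <-> accepts A b.
Proof.
move=> ab; split=> -[p Fp H]; exists p => // N; have [n Nn Hn] := H N;
  exists n => //; by rewrite -Hn !run_runq (runq_ext _ ab).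
Qed.

Lemma accepts_acc a : accepts A a <-> acc_from (dba_q0 A) a.
Proof.
split=> -[p Fp H]; exists p => // N; have [n Nn Hn] := H N;
  exists n => //; by rewrite ?run_runq in Hn *.
Qed.

Definition st (u : seq S) := foldl (@dba_delta _ A) (dba_q0 A) u.

Lemma rcong_st u v : st u = st v -> rcong (L A) u v.
Proof. by move=> e a; rewrite /L !acc_oconcat -/(st u) -/(st v) e. Qed.

Lemma st_rcong u v : rcong (L A) u v -> forall a, acc_from (st u) a <-> acc_from (st v) a.
Proof. by move=> H a; rewrite /st -!acc_oconcat; apply: H. Qed.

Lemma rcong_sym Lg (u v : seq S) : rcong Lg u v -> rcong Lg v u.
Proof. by move=> H a; rewrite H. Qed.
Lemma rcong_trans Lg (u v w : seq S) : rcong Lg u v -> rcong Lg v w -> rcong Lg u w.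
Proof. by move=> H1 H2 a; rewrite H1 H2. Qed.

Lemma rcl_eq Lg (u v : seq S) : rcong Lg u v -> rcl Lg u = rcl Lg v.
Proof.
move=> H; rewrite /rcl.
have E : rclass Lg u = rclass Lg v.
  apply: functional_extensionality => w; apply: propositional_extensionality.
  split=> H'; [exact: rcong_trans (rcong_sym H) H' | exact: rcong_trans H H'].
move: (ex_intro _ u _) (ex_intro _ v _); rewrite E => p1 p2.
by rewrite (proof_irrelevance _ p1 p2).
Qed.

Lemma rcl_rcong Lg (u v : seq S) : rcl Lg u = rcl Lg v -> rcong Lg u v.
Proof.
move=> /(f_equal (@proj1_sig _ _)) /= E.
have : rclass Lg v v by move=> a.
by rewrite -E; apply.
Qed.

Hypothesis sep : forall q q', (forall a, acc_from q a <-> acc_from q' a) -> q = q'.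

Lemma rcl_st u v : rcl (L A) u = rcl (L A) v -> st u = st v.
Proof. move=> H; apply: sep; apply: st_rcong; exact: rcl_rcong H. Qed.

Lemma ex_reach q : exists u, st u == q.
Proof. by have [u e] := dba_reach q; exists u; apply/eqP. Qed.
Definition wq (q : dba_Q A) : seq S := xchoose (ex_reach q).
Lemma st_wq q : st (wq q) = q.
Proof. exact/eqP/(xchooseP (ex_reach q)). Qed.

Lemma rclass_rcong Lg (x y : seq S) : rclass Lg x = rclass Lg y -> rcong Lg x y.
Proof. move=> E; have : rclass Lg y y by move=> a. by rewrite -E. Qed.

Lemma st_rcons u x : st (rcons u x) = dba_delta (st u) x.
Proof. by rewrite /st foldl_rcons. Qed.

Lemma sep_informative : informative_rcong A.
Proof.
pose g (C : rclasses (L A)) : dba_Q A :=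
  st (proj1_sig (constructive_indefinite_description _ (proj2_sig C))).
exists (fun q => rcl (L A) (wq q)); split; [|split].
- exists g.
  + move=> q; rewrite /g; case: constructive_indefinite_description => u /= E.
    transitivity (st (wq q)); last exact: st_wq.
    apply: sep; apply: st_rcong; apply: rcong_sym.
    exact: rclass_rcong.
  + case=> P pf; rewrite /g /=; case: constructive_indefinite_description => u /= E.
    rewrite (@rcl_eq _ _ u); last by apply: rcong_st; rewrite st_wq.
    rewrite /rcl; move: pf; rewrite E => pf; congr exist; apply: proof_irrelevance.
- by apply: rcl_eq; apply: rcong_st; rewrite st_wq.
- move=> q a q' /=; split.
  + move=> ->; exists (wq q); split => //; apply: rcl_eq; apply: rcong_st.
    by rewrite st_rcons !st_wq.
  + move=> [u [E1 E2]]; move: (rcl_st E1) (rcl_st E2); rewrite !st_wq => -> ->.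
    by rewrite st_rcons.
Qed.

End Gen.

Definition S0 : finType := bool.
Definition Q3 : finType := option bool.
Definition dA (q : Q3) (x : S0) : Q3 :=
  match q, x with
  | Some true, true => Some true
  | Some false, true => Some true
  | None, true => Some false
  | Some true, false => Some false
  | Some false, false => None
  | None, false => None
  end.

Lemma A3_reach (q : Q3) : exists u : seq S0, foldl dA (Some true) u = q.
Proof.
by case: q => [[]|]; [exists [::] | exists [:: false] | exists [:: false; false]].
Qed.

Definition A3 : DBA S0 :=
  {| dba_Q := Q3; dba_delta := dA; dba_q0 := Some true;
     dba_F := fun q => q == Some true; dba_reach := A3_reach |}.

Definition BQ : finType := bool.
Lemma Bl_reach (i : BQ) (q : BQ) : exists u : seq S0, foldl (fun _ (x : S0) => x : BQ) i u = q.
Proof. by exists [:: q]. Qed.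

Definition Bl (i : bool) : DBA S0 :=
  {| dba_Q := BQ; dba_delta := fun _ (x : S0) => x : BQ; dba_q0 := i;
     dba_F := fun q => q; dba_reach := Bl_reach i |}.

Definition io (P : S0 -> bool) (a : oword S0) := forall N, exists2 n, N <= n & P (a n).
Definition Dd : olang S0 := fun a => io id a /\ io negb a.

Lemma oconcat_addn (T : finType) (u : seq T) a n : oconcat u a (size u + n) = a n.
Proof. by rewrite /oconcat ltnNge leq_addr /= addKn. Qed.

Lemma io_oconcat P u a : io P (oconcat u a) <-> io P a.
Proof.
split=> H N.
  have [n Nn Hn] := H (size u + N).
  have Hs : size u <= n := leq_trans (leq_addr _ _) Nn.
  exists (n - size u); first by rewrite leq_subRL.
  by move: Hn; rewrite -{1}(subnKC Hs) oconcat_addn.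
have [n Nn Hn] := H N; exists (size u + n); first exact: leq_trans Nn (leq_addl _ _).
by rewrite oconcat_addn.
Qed.

Lemma Dd_triv : trivial_rcong Dd.
Proof. by move=> u v a; rewrite /Dd !io_oconcat. Qed.

Lemma evconst a : ~ Dd a -> exists N (c : S0), forall n, N <= n -> a n = c.
Proof.
move=> nD; case: (classic (io id a)) => H1.
  have H2 : ~ io negb a by move=> H2; apply: nD.
  apply: NNPP => C; apply: H2 => N; apply: NNPP => C2; apply: C.
  exists N, true => n Nn; apply: NNPP => C3; apply: C2; exists n => //.
  by move: C3; case: (a n).
apply: NNPP => C; apply: H1 => N; apply: NNPP => C2; apply: C.
exists N, false => n Nn; apply: NNPP => C3; apply: C2; exists n => //.
by move: C3; case: (a n).
Qed.

Lemma L_evconst (X : DBA S0) a N (c : S0) : (forall n, N <= n -> a n = c) ->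
  (L X a <-> acc_from (st X (mkseq a N)) (fun _ => c)).
Proof.
move=> H; rewrite /L -acc_oconcat; apply: accepts_ext => n.
rewrite /oconcat size_mkseq; case: ltnP => Hn.
  by rewrite nth_mkseq.
by rewrite H.
Qed.

Lemma A3_const (c : S0) q : acc_from (A:=A3) q (fun _ => c) <-> c.
Proof.
case: c.
  rewrite (@acc_stable _ A3 q _ 2 (Some true)) //.
  move=> n; case: n => [|[|m]] //= _; elim: m => [|m IH] /=; first by case: q => [[]|].
  by move: IH => /= ->.
rewrite (@acc_stable _ A3 q _ 2 None) //.
move=> n; case: n => [|[|m]] //= _; elim: m => [|m IH] /=; first by case: q => [[]|].
by move: IH => /= ->.
Qed.

Lemma Bl_const i (c : S0) q : acc_from (A:=Bl i) q (fun _ => c) <-> c.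
Proof.
by rewrite (@acc_stable _ (Bl i) q _ 1 c) //; case.
Qed.

Lemma Bl_equiv i : equivD Dd (L (Bl i)) (L A3).
Proof.
move=> a nD; have [N [c H]] := evconst nD.
by rewrite (L_evconst _ H) (L_evconst A3 H) Bl_const A3_const.
Qed.

Lemma Bl_min i : D_minimal Dd (Bl i).
Proof.
move=> B' E; rewrite /= card_bool; case: (leqP 2 #|dba_Q B'|) => // H.
have H1 : #|dba_Q B'| <= 1 by [].
have all0 : forall q : dba_Q B', q = dba_q0 B' by move=> q; exact: (elimT fintype_le1P H1 (dba_q0 B') q).
have K : forall a, L B' a <-> dba_F (dba_q0 B').
  move=> a; rewrite /L accepts_acc (@acc_stable _ B' _ _ 0 (dba_q0 B')) //.
have nDt : ~ Dd (fun _ => true) by move=> [_ /(_ 0) [n _]].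
have nDf : ~ Dd (fun _ => false) by move=> [/(_ 0) [n _]].
move: (E _ nDt) (E _ nDf); rewrite !K.
rewrite /L !accepts_acc !Bl_const.
move=> [_ Ht] [Hf _]; move: Ht Hf; case: (dba_F (dba_q0 B')) => Ht Hf.
  exact: Hf.
exact: Ht.
Qed.

Definition beta : oword S0 := fun n => odd n.
Definition alpha' : oword S0 := fun n => if n is k.+1 then odd k else true.

Lemma acc_alpha' q : acc_from (A:=A3) q alpha' <-> acc_from (A:=A3) (dA q true) beta.
Proof. exact: (@acc_S _ A3 q alpha'). Qed.

Lemma acc_ST : acc_from (A:=A3) (Some true) beta.
Proof.
exists (Some true) => // N; exists N.*2; first by rewrite -addnn leq_addr.
elim: N => // N IH; rewrite doubleS /= IH /beta /= odd_double //.
Qed.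

Lemma runq_SF n : runq (A:=A3) (Some false) beta n = if odd n then None else Some false.
Proof. by elim: n => //= n ->; rewrite /beta; case: (odd n). Qed.

Lemma nacc_SF : ~ acc_from (A:=A3) (Some false) beta.
Proof.
move=> [p Fp H]; have [n _] := H 0; rewrite runq_SF => E.
by move: Fp; rewrite -E; case: (odd n).
Qed.

Lemma A3_sep (q q' : dba_Q A3) :
  (forall a, acc_from q a <-> acc_from q' a) -> q = q'.
Proof.
have ST := acc_ST; have SF := nacc_SF.
have fin : forall X Y, (X <-> Y) -> (X = acc_from (A:=A3) (Some true) beta /\ Y = acc_from (A:=A3) (Some false) beta \/ Y = acc_from (A:=A3) (Some true) beta /\ X = acc_from (A:=A3) (Some false) beta) -> False.
  move=> X Y [h1 h2] [[E1 E2]|[E1 E2]]; subst; [exact: SF (h1 ST) | exact: SF (h2 ST)].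
case: q => [[]|]; case: q' => [[]|] // H; exfalso.
- by apply: (fin _ _ (H beta)); left; split; reflexivity.
- by apply: (fin _ _ (iff_trans (iff_sym (acc_alpha' _)) (iff_trans (H alpha') (acc_alpha' _)))); left; split; reflexivity.
- by apply: (fin _ _ (H beta)); right; split; reflexivity.
- by apply: (fin _ _ (iff_trans (iff_sym (acc_alpha' _)) (iff_trans (H alpha') (acc_alpha' _)))); left; split; reflexivity.
- by apply: (fin _ _ (iff_trans (iff_sym (acc_alpha' _)) (iff_trans (H alpha') (acc_alpha' _)))); right; split; reflexivity.
- by apply: (fin _ _ (iff_trans (iff_sym (acc_alpha' _)) (iff_trans (H alpha') (acc_alpha' _)))); right; split; reflexivity.
Qed.

Lemma Bl_rcong_all i u v : rcong (L (Bl i)) u v.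
Proof.
move=> a; rewrite /L !acc_oconcat.
by split=> /acc_S H; apply/acc_S; exact: H.
Qed.

Lemma Bl_ninf i : ~ informative_rcong (Bl i).
Proof.
move=> [f [[g fg gf] _]].
suff E : f true = f false by have := can_inj fg E.
case: (f true) => P1 p1; case: (f false) => P2 p2.
have E : P1 = P2.
  case: p1 => u1 ->; case: p2 => u2 ->.
  apply: functional_extensionality => w; apply: propositional_extensionality.
  by split=> _; apply: Bl_rcong_all.
subst P2; congr exist; apply: proof_irrelevance.
Qed.

Lemma Bl_niso : ~ DBA_iso (Bl true) (Bl false).
Proof.
move=> [f [_ [f0 [_ fF]]]]; have := fF true; rewrite /= in f0 *.
by rewrite f0.
Qed.

Theorem proposition2 :
  exists (S : finType) (D : olang S) (A : DBA S),
    0 < #|S| /\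
    trivial_rcong D /\
    informative_rcong A /\
    (exists B1 B2 : DBA S,
        D_minimal D B1 /\ equivD D (L B1) (L A) /\
        D_minimal D B2 /\ equivD D (L B2) (L A) /\
        ~ DBA_iso B1 B2) /\
    (exists B : DBA S,
        D_minimal D B /\ equivD D (L B) (L A) /\ ~ informative_rcong B).
Proof.
exists S0, Dd, A3; split; first by rewrite card_bool.
split; first exact: Dd_triv.
split; first exact: (sep_informative A3_sep).
split.
  exists (Bl true), (Bl false).
  by split; [exact: Bl_min | split; [exact: Bl_equiv | split; [exact: Bl_min | split; [exact: Bl_equiv | exact: Bl_niso]]]].
exists (Bl true); split; [exact: Bl_min | split; [exact: Bl_equiv | exact: Bl_ninf]].
Qed.
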